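(* For $|q|<1$ and every nonzero complex number $a$, \[ \sum_{i,j,k\geq 0} \frac{q^{i^2+j^2+k^2+i(j+k)}}{(q;q)_i(q;q)_j(q;q)_k} a^{j-k}=\frac{(-aq,-q/a,q^2;q^2)_\infty}{(q;q)_\infty}. \]
   Context: For $|q|<1$: $(a;q)_n=\prod_{k=0}^{n-1}(1-aq^k)$ ($(a;q)_0=1$), $(a;q)_\infty=\prod_{k\ge0}(1-aq^k)$, $(a_1,\dots,a_m;q)_\infty=\prod_\ell(a_\ell;q)_\infty$. *)

(* Defs.v *)
From Stdlib Require Import Reals.
From Coquelicot Require Import Coquelicot.
Open Scope C_scope.

Fixpoint qpoch (a q : C) (n : nat) : C :=
  match n with
  | O => 1
  | S m => qpoch a q m * (1 - a * q ^ m)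
  end.

Definition is_qpoch_inf (a q P : C) : Prop :=
  filterlim (fun n => qpoch a q n) eventually (locally P).

Fixpoint csum (f : nat -> C) (N : nat) : C :=
  match N with
  | O => f O
  | S M => csum f M + f (S M)
  end.

Definition cor48_term (q a : C) (i j k : nat) : C :=
  q ^ (i*i + j*j + k*k + i*(j+k))
  / (qpoch q q i * qpoch q q j * qpoch q q k)
  * (a ^ j / a ^ k).

Definition cor48_partial (q a : C) (N : nat) : C :=
  csum (fun i => csum (fun j => csum (fun k => cor48_term q a i j k) N) N) N.

(* Main.v *)
Require Import Defs.
From Stdlib Require Import Reals Lia Lra.
From Coquelicot Require Import Coquelicot.
Open Scope C_scope.

Fixpoint fsum (f : nat -> C) (n : nat) : C :=
  match n with O => 0 | S m => fsum f m + f m end.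

Fixpoint rsum (f : nat -> R) (n : nat) : R :=
  match n with O => 0%R | S m => (rsum f m + f m)%R end.

Lemma csum_fsum (f : nat -> C) N : csum f N = fsum f (S N).
Proof. induction N; simpl. ring. rewrite IHN. simpl. ring. Qed.

Lemma fsum_ext (f g : nat -> C) n : (forall k, (k < n)%nat -> f k = g k) -> fsum f n = fsum g n.
Proof. induction n; intros H; simpl; auto. rewrite IHn by (intros; apply H; lia). rewrite H by lia. auto. Qed.

Lemma fsum_plus (f g : nat -> C) n : fsum (fun k => f k + g k) n = fsum f n + fsum g n.
Proof. induction n; simpl. ring. rewrite IHn. ring. Qed.

Lemma fsum_minus (f g : nat -> C) n : fsum (fun k => f k - g k) n = fsum f n - fsum g n.
Proof. induction n; simpl. ring. rewrite IHn. ring. Qed.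

Lemma fsum_scal (c : C) (f : nat -> C) n : fsum (fun k => c * f k) n = c * fsum f n.
Proof. induction n; simpl. ring. rewrite IHn. ring. Qed.

Lemma fsum_zero (f : nat -> C) n : (forall k, (k < n)%nat -> f k = 0) -> fsum f n = 0.
Proof. induction n; intros H; simpl; auto. rewrite IHn by (intros; apply H; lia). rewrite H by lia. ring. Qed.

Lemma fsum_add (f : nat -> C) m n : fsum f (m + n) = fsum f m + fsum (fun k => f (m + k)%nat) n.
Proof. induction n; simpl. rewrite Nat.add_0_r. ring. rewrite Nat.add_succ_r. simpl. rewrite IHn. ring. Qed.

Lemma fsum_Sl (f : nat -> C) n : fsum f (S n) = f O + fsum (fun k => f (S k)) n.
Proof. replace (S n) with (1 + n)%nat by lia. rewrite fsum_add. simpl. ring. Qed.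

Lemma fsum_rev (f : nat -> C) n : fsum f n = fsum (fun k => f (n - 1 - k)%nat) n.
Proof. revert f. induction n; intros f. simpl; auto.
  rewrite (fsum_Sl (fun k => f (S n - 1 - k)%nat)). change (fsum f (S n)) with (fsum f n + f n).
  rewrite (IHn f). replace (S n - 1 - 0)%nat with n by lia. rewrite Cplus_comm. f_equal.
  apply fsum_ext. intros k Hk. f_equal. lia. Qed.

Lemma fsum_switch (u : nat -> nat -> C) m n :
  fsum (fun i => fsum (u i) n) m = fsum (fun j => fsum (fun i => u i j) m) n.
Proof. induction m; simpl. symmetry; apply fsum_zero; auto. rewrite IHm. rewrite <- fsum_plus. auto. Qed.

Lemma fsum_shift_supp (F : nat -> C) K M : (forall x, (M <= x)%nat -> F x = 0) ->
  (forall x, (x < K)%nat -> F x = 0) ->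
  fsum (fun n => F (K + n)%nat) M = fsum F M.
Proof. intros H1 H2. destruct (Compare_dec.le_lt_dec K M).
  - replace M with (K + (M - K))%nat at 2 by lia. rewrite fsum_add.
    rewrite (fsum_zero F K) by auto.
    replace M with ((M - K) + K)%nat at 1 by lia. rewrite fsum_add.
    rewrite (fsum_zero _ K). ring. intros; apply H1; lia.
  - rewrite fsum_zero. rewrite fsum_zero. auto. intros; apply H2; lia.
    intros; apply H1; lia. Qed.

Lemma fsum_last_zero (f : nat -> C) n : f n = 0 -> fsum f (S n) = fsum f n.
Proof. intros H; simpl; rewrite H; ring. Qed.

Lemma rsum_le (f g : nat -> R) n : (forall k, (k < n)%nat -> f k <= g k)%R -> (rsum f n <= rsum g n)%R.
Proof. induction n; intros H; simpl. lra. assert (f n <= g n)%R by (apply H; lia).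
  assert (rsum f n <= rsum g n)%R by (apply IHn; intros; apply H; lia). lra. Qed.

Lemma rsum_ge0 (f : nat -> R) n : (forall k, (k < n)%nat -> 0 <= f k)%R -> (0 <= rsum f n)%R.
Proof. induction n; intros H; simpl. lra. assert (0 <= f n)%R by (apply H; lia).
  assert (0 <= rsum f n)%R by (apply IHn; intros; apply H; lia). lra. Qed.

Lemma rsum_scal (c : R) (f : nat -> R) n : rsum (fun k => c * f k)%R n = (c * rsum f n)%R.
Proof. induction n; simpl. ring. rewrite IHn. ring. Qed.

Lemma Cmod_fsum (f : nat -> C) n : (Cmod (fsum f n) <= rsum (fun k => Cmod (f k)) n)%R.
Proof. induction n; simpl. rewrite Cmod_0. lra.
  eapply Rle_trans. apply Cmod_triangle. lra. Qed.

Lemma rsum_geom r n : (0 <= r < 1)%R -> (rsum (fun k => r ^ k) n <= / (1 - r))%R.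
Proof. intros Hr. assert (forall n, rsum (fun k => r ^ k) n * (1 - r) = 1 - r ^ n)%R.
  { induction n0; simpl. ring. rewrite Rmult_plus_distr_r, IHn0. ring. }
  specialize (H n). apply Rmult_le_reg_r with (1 - r)%R. lra.
  rewrite H. rewrite Rinv_l by lra. assert (0 <= r ^ n)%R by (apply pow_le; lra). lra. Qed.

Lemma rsum_add (f : nat -> R) m n : rsum f (m + n) = (rsum f m + rsum (fun k => f (m + k)%nat) n)%R.
Proof. induction n; simpl. rewrite Nat.add_0_r. ring. rewrite Nat.add_succ_r. simpl. rewrite IHn. ring. Qed.

Lemma pow_le1 x n : (0 <= x <= 1)%R -> (x ^ n <= 1)%R.
Proof. intros H. rewrite <- (pow1 n). apply pow_incr. lra. Qed.

Lemma pow_le_decr x m n : (0 <= x <= 1)%R -> (m <= n)%nat -> (x ^ n <= x ^ m)%R.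
Proof. intros H Hmn. replace n with (m + (n - m))%nat by lia. rewrite pow_add.
  assert (0 <= x ^ m)%R by (apply pow_le; lra). assert (x ^ (n - m) <= 1)%R by (apply pow_le1; lra).
  assert (0 <= x ^ (n - m))%R by (apply pow_le; lra). nra. Qed.

Definition cv (f : nat -> C) (l : C) := forall eps, (0 < eps)%R ->
  exists N0, forall N, (N0 <= N)%nat -> (Cmod (f N - l) < eps)%R.

Lemma cv_filterlim f l : filterlim f eventually (locally l) <-> cv f l.
Proof. pose proof (@filterlim_locally_ball_norm _ _ C_NormedModule eventually _ f l) as E.
  destruct E as [E1 E2]. split.
  - intros H eps Heps. specialize (E1 H). destruct (E1 (mkposreal eps Heps)) as [N0 HN]. exists N0.
    intros N HN'. specialize (HN N HN'). unfold ball_norm in HN. simpl in HN. assert (Cmod (f N - l) = @norm C_AbsRing C_NormedModule (minus (f N) l)) as -> by reflexivity. exact HN.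
  - intros H. apply E2. intros eps. destruct (H eps (cond_pos eps)) as [N0 HN]. exists N0.
    intros N HN'. specialize (HN N HN'). unfold ball_norm. change (Cmod (f N - l) < eps)%R. exact HN. Qed.

Lemma cv_const c : cv (fun _ => c) c.
Proof. intros eps He. exists O. intros. replace (c - c) with (RtoC 0) by ring. rewrite Cmod_0. auto. Qed.

Lemma cv_ext f g l : (exists M, forall N, (M <= N)%nat -> f N = g N) -> cv f l -> cv g l.
Proof. intros [M HM] H eps He. destruct (H eps He) as [N0 HN]. exists (max M N0).
  intros N HN'. rewrite <- HM by lia. apply HN. lia. Qed.

Lemma cv_plus f g l m : cv f l -> cv g m -> cv (fun N => f N + g N) (l + m).
Proof. intros Hf Hg eps He. destruct (Hf (eps/2)%R ltac:(lra)) as [N1 H1].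
  destruct (Hg (eps/2)%R ltac:(lra)) as [N2 H2]. exists (max N1 N2). intros N HN.
  replace (f N + g N - (l + m)) with ((f N - l) + (g N - m)) by ring.
  eapply Rle_lt_trans. apply Cmod_triangle. specialize (H1 N ltac:(lia)). specialize (H2 N ltac:(lia)). lra. Qed.

Lemma cv_opp f l : cv f l -> cv (fun N => - f N) (- l).
Proof. intros H eps He. destruct (H eps He) as [N0 HN]. exists N0. intros N HN'.
  replace (- f N - - l) with (- (f N - l)) by ring. rewrite Cmod_opp. auto. Qed.

Lemma cv_minus f g l m : cv f l -> cv g m -> cv (fun N => f N - g N) (l - m).
Proof. intros. apply cv_plus; auto. apply cv_opp; auto. Qed.

Lemma cv_bounded f l : cv f l -> exists B, (0 < B)%R /\ forall N, (Cmod (f N) <= B)%R.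
Proof. intros H. destruct (H 1%R ltac:(lra)) as [N0 HN].
  assert (forall M, exists B, (0 < B)%R /\ forall N, (N < M)%nat -> (Cmod (f N) <= B)%R) as HM.
  { clear HN. induction M. exists 1%R. split. lra. intros; exfalso; lia.
    destruct IHM as [B [HB HB']].
    exists (Rmax B (Cmod (f M))). split. eapply Rlt_le_trans. apply HB. apply Rmax_l.
    intros N HN'. destruct (Nat.eq_dec N M). subst. apply Rmax_r.
    eapply Rle_trans. apply HB'. lia. apply Rmax_l. }
  destruct (HM N0) as [B [HB HB']].
  exists (Rmax B (Cmod l + 1))%R. split. eapply Rlt_le_trans. apply HB. apply Rmax_l.
  intros N. destruct (Compare_dec.le_lt_dec N0 N).
  - specialize (HN N l0). eapply Rle_trans. 2: apply Rmax_r.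
    replace (f N) with ((f N - l) + l) by ring. eapply Rle_trans. apply Cmod_triangle. lra.
  - eapply Rle_trans. apply HB'. auto. apply Rmax_l. Qed.

Lemma cv_mult f g l m : cv f l -> cv g m -> cv (fun N => f N * g N) (l * m).
Proof. intros Hf Hg. destruct (cv_bounded g m Hg) as [B [HB HB']].
  intros eps He.
  set (e1 := (eps / (2 * B))%R). set (e2 := (eps / (2 * (Cmod l + 1)))%R).
  assert (0 < Cmod l + 1)%R by (pose proof (Cmod_ge_0 l); lra).
  assert (He1 : (0 < e1)%R) by (unfold e1; apply Rdiv_lt_0_compat; lra).
  assert (He2 : (0 < e2)%R) by (unfold e2; apply Rdiv_lt_0_compat; lra).
  destruct (Hf e1 He1) as [N1 H1]. destruct (Hg e2 He2) as [N2 H2].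
  exists (max N1 N2). intros N HN.
  replace (f N * g N - l * m) with ((f N - l) * g N + l * (g N - m)) by ring.
  eapply Rle_lt_trans. apply Cmod_triangle. rewrite !Cmod_mult.
  specialize (H1 N ltac:(lia)). specialize (H2 N ltac:(lia)).
  assert (Cmod (f N - l) * Cmod (g N) <= e1 * B)%R.
  { apply Rmult_le_compat; try apply Cmod_ge_0; auto. lra. }
  assert (Cmod l * Cmod (g N - m) <= (Cmod l + 1) * e2)%R.
  { apply Rmult_le_compat; try apply Cmod_ge_0; lra. }
  assert (e1 * B = eps / 2)%R by (unfold e1; field; lra).
  assert ((Cmod l + 1) * e2 = eps / 2)%R by (unfold e2; field; lra).
  assert (0 <= Cmod l)%R by apply Cmod_ge_0.
  assert ((Cmod l) * Cmod (g N - m) < (Cmod l + 1) * e2)%R.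
  { apply Rle_lt_trans with ((Cmod l + 1) * Cmod (g N - m))%R.
    apply Rmult_le_compat_r. apply Cmod_ge_0. lra. apply Rmult_lt_compat_l; lra. }
  lra. Qed.

Lemma cv_scal c f l : cv f l -> cv (fun N => c * f N) (c * l).
Proof. intros. apply cv_mult; auto. apply cv_const. Qed.

Lemma cv_inv f (l : C) : l <> 0 -> cv f l -> cv (fun N => / f N) (/ l).
Proof. intros Hl H. assert (Hm : (0 < Cmod l)%R) by (apply (proj1 (Cmod_gt_0 l)); auto).
  intros eps He.
  destruct (H (Cmod l / 2)%R ltac:(lra)) as [N1 H1].
  set (e := (eps * (Cmod l * Cmod l) / 2)%R).
  assert (0 < e)%R by (unfold e; apply Rdiv_lt_0_compat; try lra; apply Rmult_lt_0_compat; auto; apply Rmult_lt_0_compat; auto).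
  destruct (H e H0) as [N2 H2]. exists (max N1 N2). intros N HN.
  specialize (H1 N ltac:(lia)). specialize (H2 N ltac:(lia)).
  assert (Hf : (Cmod l / 2 <= Cmod (f N))%R).
  { pose proof (Cmod_triangle (l - f N) (f N)).
    replace (l - f N + f N) with l in H3 by ring.
    replace (l - f N) with (- (f N - l)) in H3 by ring.
    rewrite Cmod_opp in H3. lra. }
  assert (f N <> 0). { intros E. rewrite E, Cmod_0 in Hf. lra. }
  replace (/ f N - / l) with ((l - f N) / (f N * l)) by (field; auto).
  rewrite Cmod_div by (apply Cmult_neq_0; auto). rewrite Cmod_mult.
  replace (l - f N) with (- (f N - l)) by ring. rewrite Cmod_opp.
  apply Rlt_le_trans with (e / (Cmod l / 2 * Cmod l))%R.
  - unfold Rdiv. apply Rle_lt_trans with (Cmod (f N - l) * / (Cmod l / 2 * Cmod l))%R.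
    apply Rmult_le_compat_l. apply Cmod_ge_0. apply Rinv_le_contravar.
    apply Rmult_lt_0_compat; lra. apply Rmult_le_compat_r; lra.
    apply Rmult_lt_compat_r. apply Rinv_0_lt_compat. apply Rmult_lt_0_compat; lra. auto.
  - unfold e. right. field. lra. Qed.

Lemma cv_div f g (l m : C) : m <> 0 -> cv f l -> cv g m -> cv (fun N => f N / g N) (l / m).
Proof. intros. apply cv_mult; auto. apply cv_inv; auto. Qed.

Lemma cv_comp f l (g : nat -> nat) : (forall M, exists N0, forall N, (N0 <= N)%nat -> (M <= g N)%nat) ->
  cv f l -> cv (fun N => f (g N)) l.
Proof. intros Hg H eps He. destruct (H eps He) as [M HM]. destruct (Hg M) as [N0 HN0].
  exists N0. intros. apply HM. auto. Qed.

Lemma cv_unique f l m : cv f l -> cv f m -> l = m.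
Proof. intros H1 H2. destruct (Ceq_dec l m) as [|Hne]; auto.
  assert (0 < Cmod (l - m))%R by (apply Cmod_gt_0; intros E; apply Hne;
    replace l with (l - m + m) by ring; rewrite E; ring).
  destruct (H1 (Cmod (l - m) / 2)%R ltac:(lra)) as [N1 HN1].
  destruct (H2 (Cmod (l - m) / 2)%R ltac:(lra)) as [N2 HN2].
  specialize (HN1 (max N1 N2) ltac:(lia)). specialize (HN2 (max N1 N2) ltac:(lia)).
  pose proof (Cmod_triangle (l - f (max N1 N2)) (f (max N1 N2) - m)).
  replace (l - f (max N1 N2) + (f (max N1 N2) - m)) with (l - m) in H0 by ring.
  replace (l - f (max N1 N2)) with (- (f (max N1 N2) - l)) in H0 by ring. rewrite Cmod_opp in H0. lra. Qed.

Lemma cv_fsum (u : nat -> nat -> C) (v : nat -> C) M :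
  (forall n, cv (fun N => u N n) (v n)) -> cv (fun N => fsum (u N) M) (fsum v M).
Proof. induction M; intros H; simpl. apply cv_const. apply cv_plus; auto. Qed.

Lemma cv_0_le f g : cv g 0 -> (forall N, (Cmod (f N) <= Cmod (g N))%R) -> cv f 0.
Proof. intros H Hle eps He. destruct (H eps He) as [N0 HN]. exists N0. intros N HN'.
  specialize (HN N HN'). replace (g N - 0) with (g N) in HN by ring. replace (f N - 0) with (f N) by ring. specialize (Hle N). lra. Qed.

Fixpoint qb (p : C) (m j : nat) : C :=
  match m, j with
  | _, O => 1
  | O, S _ => 0
  | S m', S j' => qb p m' (S j') + p ^ (m' - j') * qb p m' j'
  end.

Fixpoint cf (p : C) (i K : nat) : C :=
  match i with
  | O => 1
  | S i' => (1 - p ^ K) * cf p i' (K - 1)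
  end.

Lemma qpoch_S p n : qpoch p p (S n) = qpoch p p n * (1 - p ^ (S n)).
Proof. reflexivity. Qed.

Lemma qb_m0 p m : qb p m 0 = 1.
Proof. destruct m; reflexivity. Qed.

Lemma qb_SS p m j : qb p (S m) (S j) = qb p m (S j) + p ^ (m - j) * qb p m j.
Proof. reflexivity. Qed.

Lemma qb_zero p m j : (m < j)%nat -> qb p m j = 0.
Proof. revert j; induction m; intros j H. destruct j. lia. reflexivity.
  destruct j. lia. rewrite qb_SS. rewrite !IHm by lia. ring. Qed.

Lemma qb_mm p m : qb p m m = 1.
Proof. induction m. reflexivity. rewrite qb_SS, qb_zero by lia. rewrite IHm.
  replace (m - m)%nat with O by lia. simpl. ring. Qed.

Lemma qb_prod p m j : (j <= m)%nat -> qb p m j * qpoch p p j * qpoch p p (m - j) = qpoch p p m.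
Proof. revert j; induction m; intros j H.
  - destruct j; [|lia]. simpl. ring.
  - destruct j. rewrite qb_m0. simpl. ring.
    destruct (Nat.eq_dec j m).
    + subst. rewrite qb_mm. replace (S m - S m)%nat with O by lia. simpl. ring.
    + rewrite qb_SS. pose proof (IHm (S j) ltac:(lia)) as HA. pose proof (IHm j ltac:(lia)) as HB.
      replace (S m - S j)%nat with (S (m - S j)) by lia.
      replace (m - j)%nat with (S (m - S j)) in HB by lia.
      rewrite qpoch_S in HB. rewrite !qpoch_S. rewrite qpoch_S in HA.
      replace (S (m - S j)) with (m - j)%nat in * by lia.
      replace (p ^ S m) with (p ^ (m - j) * p ^ (S j)) by (rewrite <- Cpow_add_r; f_equal; lia).
      transitivity ((qb p m (S j) * (qpoch p p j * (1 - p ^ S j)) * qpoch p p (m - S j)) * (1 - p ^ (m - j))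
        + p ^ (m - j) * (1 - p ^ S j) * (qb p m j * qpoch p p j * (qpoch p p (m - S j) * (1 - p ^ (m - j))))).
      ring. rewrite HA, HB. ring. Qed.

Lemma qpoch_nz p n : (Cmod p < 1)%R -> qpoch p p n <> 0.
Proof. intros Hp. induction n. simpl. intros E. injection E; lra.
  rewrite qpoch_S. apply Cmult_neq_0; auto. intros E.
  assert (p ^ S n = 1) by (replace (p ^ S n) with (1 - (1 - p ^ S n)) by ring; rewrite E; ring).
  assert (Cmod (p ^ S n) = 1%R) by (rewrite H; apply Cmod_1).
  rewrite Cmod_pow in H0. simpl in H0.
  assert (0 <= Cmod p)%R by apply Cmod_ge_0.
  assert (Cmod p ^ n <= 1)%R by (apply pow_le1; lra).
  assert (0 <= Cmod p ^ n)%R by (apply pow_le; lra).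
  nra. Qed.

Lemma qb_formula p m j : (Cmod p < 1)%R -> (j <= m)%nat ->
  qb p m j = qpoch p p m / (qpoch p p j * qpoch p p (m - j)).
Proof. intros Hp H. rewrite <- (qb_prod p m j H). field.
  split; apply qpoch_nz; auto. Qed.

Lemma qb_sym p m j : (Cmod p < 1)%R -> (j <= m)%nat -> qb p m j = qb p m (m - j).
Proof. intros Hp H. rewrite !qb_formula by (auto; lia). replace (m - (m - j))%nat with j by lia.
  field. split; apply qpoch_nz; auto. Qed.

Lemma qb_pascal1 p m j : (Cmod p < 1)%R ->
  qb p (S m) (S j) = qb p m j + p ^ (S j) * qb p m (S j).
Proof. intros Hp. destruct (Compare_dec.lt_eq_lt_dec j m) as [[Hlt|Heq]|Hgt].
  - rewrite !qb_formula by (auto; lia).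
    replace (S m - S j)%nat with (m - j)%nat by lia.
    replace (m - j)%nat with (S (m - S j)) by lia. rewrite !qpoch_S.
    replace (S (m - S j)) with (m - j)%nat by lia.
    replace (p ^ S m) with (p ^ (m - j) * p ^ (S j)) by (rewrite <- Cpow_add_r; f_equal; lia).
    pose proof (qpoch_nz p m Hp). pose proof (qpoch_nz p j Hp). pose proof (qpoch_nz p (m - S j) Hp).
    pose proof (qpoch_nz p (S j) Hp). pose proof (qpoch_nz p (m - j) Hp).
    rewrite qpoch_S in H2. replace (m - j)%nat with (S (m - S j)) in H3 by lia. rewrite qpoch_S in H3.
    replace (S (m - S j)) with (m - j)%nat in H3 by lia.
    assert (1 - p ^ S j <> 0) by (intros E; apply H2; rewrite E; ring).
    assert (1 - p ^ (m - j) <> 0) by (intros E; apply H3; rewrite E; ring).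
    field. repeat split; auto.
  - subst. rewrite !qb_mm. rewrite qb_zero by lia. ring.
  - rewrite !qb_zero by lia. ring. Qed.

Lemma cf_zero p i K : (K < i)%nat -> cf p i K = 0.
Proof. revert K; induction i; intros K H. lia. simpl cf. destruct K.
  replace (p ^ 0) with (RtoC 1) by reflexivity. ring. rewrite IHi by lia. ring. Qed.

Lemma cf_prod p i K : (i <= K)%nat -> cf p i K * qpoch p p (K - i) = qpoch p p K.
Proof. revert K; induction i; intros K H. simpl. rewrite Nat.sub_0_r. ring.
  destruct K. lia. simpl cf.
  replace (S K - S i)%nat with (K - i)%nat by lia.
  rewrite qpoch_S. rewrite <- (IHi K) by lia. rewrite Nat.sub_0_r. change (p ^ S K) with (p * p ^ K). ring. Qed.

Lemma Cpow_eq q a b : a = b -> q ^ a = q ^ b.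
Proof. intros ->; auto. Qed.

Lemma idA q J K : (Cmod q < 1)%R ->
  fsum (fun i => qb q J i * cf q i K * q ^ ((J - i) * (K - i))) (S J) = 1.
Proof. intros Hq. revert K. induction J; intros K.
  - simpl. ring.
  - rewrite fsum_Sl. rewrite qb_m0. simpl cf at 1.
    rewrite (fsum_ext _ (fun i => (1 - q ^ K) * (qb q J i * cf q i (K - 1) * q ^ ((J - i) * (K - 1 - i)))
        + q ^ K * (qb q J (S i) * cf q (S i) K * q ^ ((J - S i) * (K - S i))))).
    + rewrite fsum_plus, !fsum_scal. rewrite IHJ.
      rewrite (fsum_last_zero (fun k => qb q J (S k) * cf q (S k) K * q ^ ((J - S k) * (K - S k))) J).
      2: { rewrite qb_zero by lia. ring. }
      pose proof (IHJ K) as HK. rewrite fsum_Sl, qb_m0 in HK. change (cf q 0 K) with (RtoC 1) in HK.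
      replace ((S J - 0) * (K - 0))%nat with (K + (J - 0) * (K - 0))%nat by lia.
      rewrite Cpow_add_r.
      match type of HK with ?X = _ => transitivity (q ^ K * X + (1 - q ^ K)) end.
      change (cf q 0 K) with (RtoC 1). ring. rewrite HK. ring.
    + intros i Hi. rewrite qb_pascal1 by auto. simpl cf.
      replace (S J - S i)%nat with (J - i)%nat by lia.
      replace (K - S i)%nat with (K - 1 - i)%nat by lia.
      destruct (Compare_dec.le_lt_dec (S i) J) as [HJ|HJ]; [destruct (Compare_dec.le_lt_dec (S i) K) as [HK|HK]|].
      * replace ((J - S i) * (K - 1 - i))%nat with ((J - S i) * (K - 1 - i))%nat by lia.
        assert (E : q ^ S i * q ^ ((J - i) * (K - 1 - i)) = q ^ K * q ^ ((J - S i) * (K - 1 - i))).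
        { rewrite <- !Cpow_add_r. apply Cpow_eq.
          replace (J - i)%nat with (S (J - S i)) by lia.
          replace K with (S i + (K - 1 - i))%nat at 2 by lia. simpl. ring. }
        transitivity ((1 - q ^ K) * (qb q J i * cf q i (K - 1) * q ^ ((J - i) * (K - 1 - i))) +
          (q ^ S i * q ^ ((J - i) * (K - 1 - i))) * (qb q J (S i) * ((1 - q ^ K) * cf q i (K - 1)))).
        ring. rewrite E. ring.
      * destruct K. change (q ^ 0) with (RtoC 1). ring. rewrite (cf_zero q i (S K - 1)) by lia. ring.
      * rewrite (qb_zero q J (S i)) by lia. ring.
Qed.

Lemma qb_eq p m m' j j' : m = m' -> j = j' -> qb p m j = qb p m' j'.
Proof. intros -> ->; auto. Qed.

Lemma vdm q m k d :
  fsum (fun j => qb q m j * qb q (k + d) (k - j) * q ^ (j * (d + j))) (S k) = qb q (m + k + d) k.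
Proof. revert k d. induction m; intros k d.
  - rewrite fsum_Sl. rewrite fsum_zero. rewrite qb_m0. simpl. rewrite Nat.sub_0_r. ring.
    intros j Hj. simpl. ring.
  - rewrite fsum_Sl. rewrite qb_m0.
    rewrite (fsum_ext _ (fun j => qb q m (S j) * qb q (k + d) (k - S j) * q ^ (S j * (d + S j))
       + q ^ (m - j) * qb q m j * qb q (k + d) (k - S j) * q ^ (S j * (d + S j)))).
    2: { intros j Hj. rewrite qb_SS. ring. }
    rewrite fsum_plus.
    pose proof (IHm k d) as H1. rewrite fsum_Sl, qb_m0 in H1.
    destruct k as [|k'].
    + simpl fsum. rewrite !qb_m0. simpl. ring.
    + rewrite (fsum_ext (fun j => q ^ (m - j) * qb q m j * qb q (S k' + d) (S k' - S j) * q ^ (S j * (d + S j)))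
         (fun j => q ^ (m + d + 1) * (qb q m j * qb q (k' + S d) (k' - j) * q ^ (j * (S d + j))))).
      2: { intros j Hj. destruct (Compare_dec.le_lt_dec j m).
           - replace (S k' + d)%nat with (k' + S d)%nat by lia. replace (S k' - S j)%nat with (k' - j)%nat by lia.
             transitivity ((q ^ (m - j) * q ^ (S j * (d + S j))) * (qb q m j * qb q (k' + S d) (k' - j))). ring.
             rewrite <- Cpow_add_r. 
             transitivity ((q ^ (m + d + 1) * q ^ (j * (S d + j))) * (qb q m j * qb q (k' + S d) (k' - j))).
             2: ring. rewrite <- Cpow_add_r. f_equal. apply Cpow_eq.
             replace m with (j + (m - j))%nat at 2 by lia. ring_simplify. lia.
           - rewrite qb_zero by lia. ring. }
      rewrite fsum_scal. rewrite (IHm k' (S d)).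
      match type of H1 with ?X = _ => transitivity (X + q ^ (m + d + 1) * qb q (m + k' + S d) k') end.
      ring. rewrite H1.
      replace (S m + S k' + d)%nat with (S (m + S k' + d)) by lia. rewrite qb_SS.
      replace (m + S k' + d - k')%nat with (m + d + 1)%nat by lia.
      replace (m + k' + S d)%nat with (m + S k' + d)%nat by lia. ring.
Qed.

Fixpoint fprod (f : nat -> C) (n : nat) : C :=
  match n with O => 1 | S m => fprod f m * f m end.

Fixpoint tri (k : nat) : nat := match k with O => O | S k' => (tri k' + k')%nat end.

Lemma rothe p y z m : fprod (fun i => y + z * p ^ i) m =
  fsum (fun k => qb p m k * p ^ (tri k) * z ^ k * y ^ (m - k)) (S m).
Proof. induction m.
  - simpl. ring.
  - change (fprod (fun i => y + z * p ^ i) (S m)) with (fprod (fun i => y + z * p ^ i) m * (y + z * p ^ m)).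
    rewrite IHm. rewrite (fsum_Sl (fun k => qb p (S m) k * p ^ tri k * z ^ k * y ^ (S m - k))). rewrite qb_m0.
    rewrite (fsum_ext (fun k => qb p (S m) (S k) * p ^ tri (S k) * z ^ (S k) * y ^ (S m - S k)) (fun k => qb p m (S k) * p ^ tri (S k) * z ^ S k * y ^ (S m - S k)
       + z * p ^ m * (qb p m k * p ^ tri k * z ^ k * y ^ (m - k)))).
    2: { intros k Hk. cbv beta. rewrite qb_SS. replace (S m - S k)%nat with (m - k)%nat by lia.
         simpl tri. rewrite !Cpow_add_r.
         replace (p ^ m) with (p ^ (m - k) * p ^ k) by (rewrite <- Cpow_add_r; f_equal; lia).
         simpl. ring. }
    rewrite fsum_plus, fsum_scal.
    rewrite (fsum_last_zero (fun k => qb p m (S k) * p ^ tri (S k) * z ^ S k * y ^ (S m - S k)) m).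
    2: { rewrite qb_zero by lia. ring. }
    rewrite (fsum_Sl (fun k => qb p m k * p ^ tri k * z ^ k * y ^ (m - k))).
    rewrite (fsum_ext (fun k => qb p m (S k) * p ^ tri (S k) * z ^ S k * y ^ (S m - S k))
       (fun k => y * (qb p m (S k) * p ^ tri (S k) * z ^ S k * y ^ (m - S k)))).
    2: { intros k Hk. replace (S m - S k)%nat with (S (m - S k)) by lia. simpl. ring. }
    rewrite fsum_scal. rewrite qb_m0.
    set (G := fsum (fun k : nat => qb p m (S k) * p ^ tri (S k) * z ^ S k * y ^ (m - S k)) m).
    rewrite Nat.sub_0_r. replace (S m - 0)%nat with (S m) by lia. change (y ^ S m) with (y * y ^ m).
    change (tri 0) with O. change (p ^ 0) with (RtoC 1). change (z ^ 0) with (RtoC 1). ring.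
Qed.

Lemma fprod_ext (f g : nat -> C) n : (forall k, (k < n)%nat -> f k = g k) -> fprod f n = fprod g n.
Proof. induction n; intros H; simpl; auto. rewrite IHn by (intros; apply H; lia). rewrite H by lia. auto. Qed.

Lemma fprod_mult (f g : nat -> C) n : fprod (fun k => f k * g k) n = fprod f n * fprod g n.
Proof. induction n; simpl. ring. rewrite IHn. ring. Qed.

Lemma fprod_const (c : C) n : fprod (fun _ => c) n = c ^ n.
Proof. induction n; simpl. auto. rewrite IHn. ring. Qed.

Lemma fprod_add (f : nat -> C) m n : fprod f (m + n) = fprod f m * fprod (fun k => f (m + k)%nat) n.
Proof. induction n; simpl. rewrite Nat.add_0_r. ring. rewrite Nat.add_succ_r. simpl. rewrite IHn. ring. Qed.

Lemma fprod_Sl (f : nat -> C) n : fprod f (S n) = f O * fprod (fun k => f (S k)) n.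
Proof. replace (S n) with (1 + n)%nat by lia. rewrite fprod_add. simpl. ring. Qed.

Lemma fprod_rev (f : nat -> C) n : fprod f n = fprod (fun k => f (n - 1 - k)%nat) n.
Proof. revert f. induction n; intros f. simpl; auto.
  rewrite (fprod_Sl (fun k => f (S n - 1 - k)%nat)). change (fprod f (S n)) with (fprod f n * f n).
  rewrite (IHn f). replace (S n - 1 - 0)%nat with n by lia. rewrite Cmult_comm. f_equal.
  apply fprod_ext. intros k Hk. f_equal. lia. Qed.

Lemma qpoch_fprod x p n : qpoch x p n = fprod (fun k => 1 - x * p ^ k) n.
Proof. induction n; simpl; auto. rewrite IHn. auto. Qed.

Lemma fprod_odd q N : fprod (fun i => q ^ (2 * i + 1)) N = q ^ (N * N).
Proof. induction N. auto.
  change (fprod (fun i => q ^ (2 * i + 1)) (S N)) with (fprod (fun i => q ^ (2 * i + 1)) N * q ^ (2 * N + 1)). rewrite IHN. rewrite <- Cpow_add_r. apply Cpow_eq. lia. Qed.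

Lemma tri2 k : (2 * tri k + k = k * k)%nat.
Proof. induction k; simpl tri. auto. nia. Qed.

Lemma jtp_finite (q a : C) N : (Cmod q < 1)%R -> a <> 0 ->
  qpoch (- a * q) (q ^ 2) N * qpoch (- q / a) (q ^ 2) N =
  fsum (fun n => q ^ (n * n) * a ^ n * qb (q ^ 2) (2 * N) (N + n)) (S N) +
  fsum (fun n => q ^ (S n * S n) / a ^ (S n) * qb (q ^ 2) (2 * N) (N + S n)) N.
Proof. intros Hq Ha. destruct (Ceq_dec q 0) as [Hq0|Hq0].
  - subst q. replace (RtoC 0 ^ 2) with (RtoC 0) by (simpl; ring).
    rewrite !qpoch_fprod. rewrite (fprod_ext _ (fun _ => 1)).
    2: { intros; ring. }
    rewrite (fprod_ext (fun k => 1 - - (0) / a * 0 ^ k) (fun _ => 1)).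
    2: { intros. field. auto. }
    rewrite fprod_const, Cpow_1_l.
    rewrite fsum_Sl. rewrite fsum_zero. rewrite fsum_zero.
    rewrite Nat.add_0_r. rewrite qb_formula. rewrite !qpoch_fprod.
    rewrite !(fprod_ext (fun k => 1 - 0 * 0 ^ k) (fun _ => 1)) by (intros; ring).
    rewrite !fprod_const, !Cpow_1_l. simpl. field.
    rewrite Cmod_0; lra. lia.
    + intros n Hn. replace (S n * S n)%nat with (S (n + n * S n)) by lia. rewrite Cpow_S. unfold Cdiv. ring.
    + intros n Hn. replace (S n * S n)%nat with (S (n + n * S n)) by lia. rewrite Cpow_S. unfold Cdiv. ring.
  - assert (Hq2 : (Cmod (q ^ 2) < 1)%R).
    { rewrite Cmod_pow. assert (0 <= Cmod q)%R by apply Cmod_ge_0. simpl. nra. }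
    pose proof (rothe (q ^ 2) (q ^ (2 * N)) (a * q) (2 * N)) as R.
    assert (HT : forall k, qb (q ^ 2) (2 * N) k * (q ^ 2) ^ tri k * (a * q) ^ k * (q ^ (2 * N)) ^ (2 * N - k)
       = qb (q ^ 2) (2 * N) k * a ^ k * q ^ (k * k + 2 * N * (2 * N - k))).
    { intros k. rewrite <- !Cpow_mult_r. rewrite Cpow_mult_l. rewrite <- (tri2 k).
      rewrite !Cpow_add_r. ring. }
    rewrite (fsum_ext _ _ _ (fun k _ => HT k)) in R. clear HT.
    replace (S (2 * N)) with (N + S N)%nat in R by lia. rewrite fsum_add in R.
    rewrite fsum_rev in R.
    rewrite (fsum_ext (fun n => qb (q ^ 2) (2 * N) (N + n) * a ^ (N + n) * q ^ ((N + n) * (N + n) + 2 * N * (2 * N - (N + n))))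
       (fun n => (q ^ (3 * N * N) * a ^ N) * (q ^ (n * n) * a ^ n * qb (q ^ 2) (2 * N) (N + n)))) in R.
    2: { intros n Hn. replace ((N + n) * (N + n) + 2 * N * (2 * N - (N + n)))%nat with (3 * N * N + n * n)%nat.
         rewrite !Cpow_add_r. ring. replace N with (n + (N - n))%nat by lia. nia. }
    rewrite (fsum_ext (fun k => qb (q ^ 2) (2 * N) (N - 1 - k) * a ^ (N - 1 - k) * q ^ ((N - 1 - k) * (N - 1 - k) + 2 * N * (2 * N - (N - 1 - k))))
       (fun n => (q ^ (3 * N * N) * a ^ N) * (q ^ (S n * S n) / a ^ S n * qb (q ^ 2) (2 * N) (N + S n)))) in R.
    2: { intros n Hn. replace ((N - 1 - n) * (N - 1 - n) + 2 * N * (2 * N - (N - 1 - n)))%nat with (3 * N * N + S n * S n)%nat.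
         rewrite qb_sym by (auto; lia). replace (2 * N - (N - 1 - n))%nat with (N + S n)%nat by lia.
         replace (a ^ N) with (a ^ (N - 1 - n) * a ^ (S n)) by (rewrite <- Cpow_add_r; apply Cpow_eq; lia).
         rewrite Cpow_add_r. field. apply Cpow_nz; auto.
         replace N with (S n + (N - S n))%nat by lia. nia. }
    rewrite !fsum_scal in R. rewrite <- Cmult_plus_distr_l in R.
    replace (2 * N)%nat with (N + N)%nat in R at 1 by lia. rewrite fprod_add in R.
    rewrite (fprod_ext _ (fun i => q ^ (2 * i + 1) * (a + q ^ (2 * (N - 1 - i) + 1)))) in R.
    2: { intros i Hi. rewrite <- Cpow_mult_r. rewrite Cmult_plus_distr_l. rewrite <- Cpow_add_r.
         replace (2 * i + 1 + (2 * (N - 1 - i) + 1))%nat with (2 * N)%nat by lia.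
         replace (2 * i + 1)%nat with (S (2 * i)) by lia. rewrite Cpow_S. ring. }
    rewrite fprod_mult, fprod_odd in R.
    rewrite (fprod_rev (fun k => a + q ^ (2 * (N - 1 - k) + 1))) in R.
    rewrite (fprod_ext (fun k => a + q ^ (2 * (N - 1 - (N - 1 - k)) + 1)) (fun i => a * (1 - - q / a * (q ^ 2) ^ i))) in R.
    2: { intros i Hi. rewrite <- Cpow_mult_r. replace (2 * (N - 1 - (N - 1 - i)) + 1)%nat with (S (2 * i)) by lia.
         rewrite Cpow_S. field. auto. }
    rewrite (fprod_ext (fun k => q ^ (2 * N) + a * q * (q ^ 2) ^ (N + k)) (fun i => q ^ (2 * N) * (1 - - a * q * (q ^ 2) ^ i))) in R.
    2: { intros i Hi. rewrite <- !Cpow_mult_r. replace (2 * (N + i))%nat with (2 * N + 2 * i)%nat by lia.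
         rewrite Cpow_add_r. ring. }
    rewrite !fprod_mult, !fprod_const in R. rewrite <- !qpoch_fprod in R.
    rewrite Cplus_comm.
    assert (E : q ^ (3 * N * N) * a ^ N * (qpoch (- a * q) (q ^ 2) N * qpoch (- q / a) (q ^ 2) N) =
                q ^ (3 * N * N) * a ^ N * (fsum (fun n => q ^ (S n * S n) / a ^ S n * qb (q ^ 2) (2 * N) (N + S n)) N + 
                 fsum (fun n => q ^ (n * n) * a ^ n * qb (q ^ 2) (2 * N) (N + n)) (S N))).
    { rewrite <- R. rewrite <- Cpow_mult_r. replace (3 * N * N)%nat with (N * N + 2 * N * N)%nat by lia.
      rewrite Cpow_add_r. ring. }
    assert (Hnz : q ^ (3 * N * N) * a ^ N <> 0) by (apply Cmult_neq_0; apply Cpow_nz; auto).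
    match type of E with ?c * ?X = ?c * ?Y =>
      transitivity (/ c * (c * X)); [field | rewrite E; field]; split; apply Cpow_nz; auto end.
Qed.

Lemma Cmult_eq_reg_r (x y z : C) : x * z = y * z -> z <> 0 -> x = y.
Proof. intros H Hz. transitivity (x * z / z). field; auto. rewrite H. field; auto. Qed.

Lemma qb_cf q N J : (Cmod q < 1)%R -> qb q N J * qpoch q q J = cf q J N.
Proof. intros Hq. destruct (Compare_dec.le_lt_dec J N).
  - pose proof (qb_prod q N J l). pose proof (cf_prod q J N l).
    pose proof (qpoch_nz q (N - J) Hq).
    apply (Cmult_eq_reg_r _ _ (qpoch q q (N - J))); auto. rewrite H0, <- H. ring.
  - rewrite qb_zero, cf_zero by lia. ring. Qed.

Definition EJK (q a : C) N J K := q ^ (J * J + K * K - J * K) * (a ^ J / a ^ K) * qb q N J * qb q N K.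
Definition HH (q a : C) N i J K := EJK q a N J K * (qb q J i * cf q i K * q ^ ((J - i) * (K - i))).

Lemma term_id (q a : C) N i j k : (Cmod q < 1)%R -> a <> 0 ->
  cor48_term q a i j k * cf q (i + j) N * cf q (i + k) N = HH q a N i (i + j) (i + k).
Proof. intros Hq Ha. unfold HH, EJK, cor48_term.
  rewrite <- (qb_cf q N (i + j)), <- (qb_cf q N (i + k)) by auto.
  rewrite (qb_formula q (i + j) i) by (auto; lia).
  assert (Hc : cf q i (i + k) = qpoch q q (i + k) / qpoch q q k).
  { pose proof (cf_prod q i (i + k) ltac:(lia)). replace (i + k - i)%nat with k in H by lia.
    rewrite <- H. field. apply qpoch_nz; auto. }
  rewrite Hc. replace (i + j - i)%nat with j by lia. replace (i + k - i)%nat with k by lia.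
  assert (X : ((i+j)*(i+j) + (i+k)*(i+k) - (i+j)*(i+k) + j*k = i*i+j*j+k*k+i*(j+k))%nat) by nia.
  rewrite <- X. rewrite !Cpow_add_r.
  pose proof (qpoch_nz q i Hq). pose proof (qpoch_nz q j Hq). pose proof (qpoch_nz q k Hq).
  pose proof (qpoch_nz q (i + j) Hq). pose proof (qpoch_nz q (i + k) Hq).
  pose proof (Cpow_nz a i Ha). pose proof (Cpow_nz a j Ha). pose proof (Cpow_nz a k Ha).
  field. repeat split; auto.
Qed.

Lemma fsum_shift_ind (F : nat -> C) K M : (forall x, (M <= x)%nat -> F x = 0) ->
  fsum (fun n => F (K + n)%nat) M = fsum (fun J => if Nat.leb K J then F J else 0) M.
Proof. intros H. rewrite <- (fsum_shift_supp (fun J => if Nat.leb K J then F J else 0) K M).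
  - apply fsum_ext. intros n Hn. replace (Nat.leb K (K + n)) with true. auto.
    symmetry. apply Nat.leb_le. lia.
  - intros x Hx. destruct (Nat.leb K x); auto.
  - intros x Hx. replace (Nat.leb K x) with false. auto. symmetry. apply Nat.leb_gt. lia.
Qed.

Lemma diag_split (G : nat -> nat -> C) M :
  (forall J K, (M <= J)%nat -> G J K = 0) -> (forall J K, (M <= K)%nat -> G J K = 0) ->
  fsum (fun J => fsum (fun K => G J K) M) M =
  fsum (fun n => fsum (fun K => G (K + n)%nat K) M) M +
  fsum (fun n => fsum (fun J => G J (J + S n)%nat) M) M.
Proof. intros H1 H2.
  rewrite (fsum_switch (fun n K => G (K + n)%nat K)).
  rewrite (fsum_switch (fun n J => G J (J + S n)%nat)).
  rewrite (fsum_ext (fun K => fsum (fun n => G (K + n)%nat K) M)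
     (fun K => fsum (fun J => if Nat.leb K J then G J K else 0) M)).
  2: { intros K HK. apply (fsum_shift_ind (fun J => G J K)). intros; auto. }
  rewrite (fsum_ext (fun J => fsum (fun n => G J (J + S n)%nat) M)
     (fun J => fsum (fun K => if Nat.leb (S J) K then G J K else 0) M)).
  2: { intros J HJ. rewrite <- (fsum_shift_ind (fun K => G J K)). apply fsum_ext. intros. f_equal. lia. intros; auto. }
  rewrite (fsum_switch (fun K J => if Nat.leb K J then G J K else 0)).
  rewrite <- fsum_plus. apply fsum_ext. intros J HJ. rewrite <- fsum_plus. apply fsum_ext. intros K HK.
  destruct (Nat.leb K J) eqn:E1; destruct (Nat.leb (S J) K) eqn:E2.
  - apply Nat.leb_le in E1. apply Nat.leb_le in E2. lia.
  - ring.
  - ring.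
  - apply Nat.leb_gt in E1. apply Nat.leb_gt in E2. lia.
Qed.

Lemma vdm_inst q N m : (Cmod q < 1)%R -> (m <= N)%nat ->
  fsum (fun K => q ^ (K * (K + m)) * qb q N K * qb q N (K + m)) (S N) = qb q (2 * N) (N + m).
Proof. intros Hq Hm.
  replace (S N) with (S (N - m) + m)%nat by lia. rewrite fsum_add.
  rewrite (fsum_zero (fun k => q ^ ((S (N - m) + k) * (S (N - m) + k + m)) * qb q N (S (N - m) + k) * qb q N (S (N - m) + k + m))).
  2: { intros k Hk. rewrite (qb_zero q N (S (N - m) + k + m)) by lia. ring. }
  pose proof (vdm q N (N - m) m) as V.
  replace (N - m + m)%nat with N in V by lia. replace (N + (N - m) + m)%nat with (2 * N)%nat in V by lia.
  rewrite (qb_sym q (2 * N) (N - m)) in V by (auto; lia). replace (2 * N - (N - m))%nat with (N + m)%nat in V by lia.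
  rewrite <- V. rewrite Cplus_0_r. apply fsum_ext. intros K HK.
  rewrite (qb_sym q N (K + m)) by (auto; lia). replace (N - (K + m))%nat with (N - m - K)%nat by lia.
  replace (K * (K + m))%nat with (K * (m + K))%nat by lia. ring.
Qed.

Definition Wsum (q a : C) N := fsum (fun i => fsum (fun j => fsum (fun k =>
  cor48_term q a i j k * cf q (i + j) N * cf q (i + k) N) (S N)) (S N)) (S N).

Lemma W_closed (q a : C) N : (Cmod q < 1)%R -> a <> 0 ->
  Wsum q a N = fsum (fun n => q ^ (n * n) * a ^ n * qb q (2 * N) (N + n)) (S N) +
    fsum (fun n => q ^ (S n * S n) / a ^ (S n) * qb q (2 * N) (N + S n)) N.
Proof. intros Hq Ha. unfold Wsum.
  assert (HHJ : forall i J K, (S N <= J)%nat -> HH q a N i J K = 0).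
  { intros. unfold HH, EJK. rewrite (qb_zero q N J) by lia. ring. }
  assert (HHK : forall i J K, (S N <= K)%nat -> HH q a N i J K = 0).
  { intros. unfold HH, EJK. rewrite (qb_zero q N K) by lia. ring. }
  rewrite (fsum_ext _ (fun i => fsum (fun J => fsum (fun K => HH q a N i J K) (S N)) (S N))).
  2: { intros i Hi.
       rewrite (fsum_ext _ (fun j => fsum (fun K => HH q a N i (i + j) K) (S N))).
       2: { intros j Hj. transitivity (fsum (fun n => HH q a N i (i + j) (i + n)) (S N)).
            apply fsum_ext. intros. apply term_id; auto.
            apply (fsum_shift_supp (HH q a N i (i + j)) i (S N)).
            intros; auto. intros x Hx. unfold HH. rewrite (cf_zero q i x) by lia. ring. }
       apply (fsum_shift_supp (fun J => fsum (fun K => HH q a N i J K) (S N)) i (S N)).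
       - intros x Hx. apply fsum_zero. intros; auto.
       - intros x Hx. apply fsum_zero. intros. unfold HH. rewrite (qb_zero q x i) by lia. ring. }
  rewrite (fsum_switch (fun i J => fsum (fun K => HH q a N i J K) (S N))).
  rewrite (fsum_ext _ (fun J => fsum (fun K => EJK q a N J K) (S N))).
  2: { intros J HJ. rewrite (fsum_switch (fun i K => HH q a N i J K)). apply fsum_ext. intros K HK.
       unfold HH. rewrite fsum_scal.
       replace (S N) with (S J + (N - J))%nat by lia. rewrite fsum_add.
       rewrite idA by auto. rewrite fsum_zero. ring.
       intros x Hx. rewrite (qb_zero q J (S J + x)) by lia. ring. }
  rewrite diag_split.
  2: { intros. unfold EJK. rewrite (qb_zero q N J) by lia. ring. }
  2: { intros. unfold EJK. rewrite (qb_zero q N K) by lia. ring. }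
  f_equal.
  - apply fsum_ext. intros n Hn.
    rewrite <- (vdm_inst q N n) by (auto; lia). rewrite <- fsum_scal. apply fsum_ext. intros K HK.
    unfold EJK. replace ((K + n) * (K + n) + K * K - (K + n) * K)%nat with (n * n + K * (K + n))%nat by nia.
    rewrite !Cpow_add_r. field. apply Cpow_nz; auto.
  - rewrite fsum_last_zero.
    2: { apply fsum_zero. intros J HJ. unfold EJK. rewrite (qb_zero q N (J + S N)) by lia. ring. }
    apply fsum_ext. intros n Hn.
    rewrite <- (vdm_inst q N (S n)) by (auto; lia). rewrite <- fsum_scal. apply fsum_ext. intros K HK.
    unfold EJK. replace (K * K + (K + S n) * (K + S n) - K * (K + S n))%nat with (S n * S n + K * (K + S n))%nat by nia.
    rewrite !Cpow_add_r. field. split; apply Cpow_nz; auto.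
Qed.

Lemma exp_le (x y : R) : (x <= y)%R -> (exp x <= exp y)%R.
Proof. intros [H|H]. left; apply exp_increasing; auto. subst; lra. Qed.

Lemma rsum_ext (f g : nat -> R) n : (forall k, (k < n)%nat -> f k = g k) -> rsum f n = rsum g n.
Proof. induction n; intros H; simpl; auto. rewrite IHn by (intros; apply H; lia). rewrite H by lia. auto. Qed.

Lemma rsum_powS r m : (0 <= r < 1)%R -> (rsum (fun k => r ^ S k) m <= / (1 - r))%R.
Proof. intros Hr. rewrite (rsum_ext _ (fun k => r * r ^ k)%R) by (intros; reflexivity).
  rewrite rsum_scal. pose proof (rsum_geom r m Hr).
  assert (0 <= rsum (fun k => r ^ k) m)%R by (apply rsum_ge0; intros; apply pow_le; lra).
  assert (r * rsum (fun k => r ^ k) m <= 1 * rsum (fun k => r ^ k) m)%R by (apply Rmult_le_compat_r; lra).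
  change (rsum (pow r) m) with (rsum (fun k => r ^ k)%R m). lra. Qed.

Lemma Cmod_1_minus (z : C) : (1 - Cmod z <= Cmod (1 - z))%R.
Proof. pose proof (Cmod_triangle (1 - z) z). replace (1 - z + z) with (RtoC 1) in H by ring.
  rewrite Cmod_1 in H. lra. Qed.

Lemma Cmod_1_plus (z : C) : (Cmod (1 - z) <= 1 + Cmod z)%R.
Proof. pose proof (Cmod_triangle 1 (- z)). rewrite Cmod_opp, Cmod_1 in H. auto. Qed.

Lemma qpoch_upper p m : (Cmod (qpoch p p m) <= exp (rsum (fun k => Cmod p ^ S k) m))%R.
Proof. induction m. simpl. rewrite Cmod_1, exp_0. lra.
  rewrite qpoch_S, Cmod_mult. simpl rsum. rewrite exp_plus.
  apply Rmult_le_compat. apply Cmod_ge_0. apply Cmod_ge_0. auto.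
  eapply Rle_trans. apply Cmod_1_plus. rewrite Cmod_pow. apply exp_ineq1_le. Qed.

Lemma log_bound (x r : R) : (0 <= x <= r)%R -> (r < 1)%R -> (exp (- (x / (1 - r))) <= 1 - x)%R.
Proof. intros Hx Hr. set (y := (x / (1 - x))%R).
  assert (0 <= y)%R by (unfold y; apply Rmult_le_pos; try lra; left; apply Rinv_0_lt_compat; lra).
  assert (y <= x / (1 - r))%R.
  { unfold y, Rdiv. apply Rmult_le_compat_l. lra. apply Rinv_le_contravar; lra. }
  apply Rle_trans with (exp (- y)). apply exp_le. lra.
  rewrite exp_Ropp. pose proof (exp_ineq1_le y).
  assert (1 + y = / (1 - x))%R by (unfold y; field; lra).
  rewrite H2 in H1. apply Rle_trans with (/ / (1 - x))%R.
  apply Rinv_le_contravar. apply Rinv_0_lt_compat; lra. auto. right; field; lra. Qed.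

Lemma qpoch_lower p m : (Cmod p < 1)%R ->
  (exp (- (rsum (fun k => Cmod p ^ S k) m / (1 - Cmod p))) <= Cmod (qpoch p p m))%R.
Proof. intros Hp. pose proof (Cmod_ge_0 p). induction m. simpl. rewrite Cmod_1.
  replace (- (0 / (1 - Cmod p)))%R with 0%R by (field; lra). rewrite exp_0. lra.
  rewrite qpoch_S, Cmod_mult.
  change (rsum (fun k => Cmod p ^ S k) (S m))%R with (rsum (fun k => Cmod p ^ S k) m + Cmod p ^ S m)%R.
  replace (- ((rsum (fun k => Cmod p ^ S k) m + Cmod p ^ S m) / (1 - Cmod p)))%R with
    (- (rsum (fun k => Cmod p ^ S k) m / (1 - Cmod p)) + - (Cmod p ^ S m / (1 - Cmod p)))%R by (field; lra).
  rewrite exp_plus. apply Rmult_le_compat. left; apply exp_pos. left; apply exp_pos. auto.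
  eapply Rle_trans. 2: apply Cmod_1_minus. rewrite Cmod_pow. apply log_bound; auto.
  split. apply pow_le; auto. simpl. 
  assert (Cmod p ^ m <= 1)%R by (apply pow_le1; lra).
  assert (0 <= Cmod p ^ m)%R by (apply pow_le; lra). nra. Qed.

Lemma qpoch_bounds p : (Cmod p < 1)%R -> exists d U, (0 < d)%R /\ forall m, (d <= Cmod (qpoch p p m) <= U)%R.
Proof. intros Hp. pose proof (Cmod_ge_0 p).
  exists (exp (- (/ (1 - Cmod p) / (1 - Cmod p))))%R, (exp (/ (1 - Cmod p))).
  split. apply exp_pos. intros m. pose proof (rsum_powS (Cmod p) m ltac:(lra)). split.
  - eapply Rle_trans. 2: apply qpoch_lower; auto. apply exp_le. apply Ropp_le_contravar.
    unfold Rdiv. apply Rmult_le_compat_r. left; apply Rinv_0_lt_compat; lra. auto.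
  - eapply Rle_trans. apply qpoch_upper. apply exp_le. auto. Qed.

Lemma qb_bound p : (Cmod p < 1)%R -> exists B, (0 <= B)%R /\ forall m j, (Cmod (qb p m j) <= B)%R.
Proof. intros Hp. destruct (qpoch_bounds p Hp) as [d [U [Hd HdU]]].
  assert (0 <= U)%R by (destruct (HdU O); lra).
  exists (U / (d * d))%R. split. apply Rmult_le_pos; auto. left; apply Rinv_0_lt_compat; nra.
  intros m j. destruct (Compare_dec.le_lt_dec j m).
  - rewrite qb_formula by auto. rewrite Cmod_div. rewrite Cmod_mult.
    destruct (HdU m), (HdU j), (HdU (m - j)%nat).
    unfold Rdiv. apply Rmult_le_compat. apply Cmod_ge_0. left; apply Rinv_0_lt_compat; nra. auto.
    apply Rinv_le_contravar. nra. apply Rmult_le_compat; lra.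
    apply Cmult_neq_0; apply qpoch_nz; auto.
  - rewrite qb_zero by auto. rewrite Cmod_0. apply Rmult_le_pos; auto. left; apply Rinv_0_lt_compat; nra. Qed.

Lemma cf_bound q : (Cmod q < 1)%R -> exists B, (0 <= B)%R /\ forall J N, (Cmod (cf q J N) <= B)%R.
Proof. intros Hq. destruct (qb_bound q Hq) as [B [HB HB']]. destruct (qpoch_bounds q Hq) as [d [U [Hd HdU]]].
  assert (0 <= U)%R by (destruct (HdU O); lra).
  exists (B * U)%R. split. nra. intros J N. rewrite <- qb_cf by auto. rewrite Cmod_mult.
  apply Rmult_le_compat; try apply Cmod_ge_0; auto. apply HdU. Qed.

Lemma rsum_term (f : nat -> R) M k : (forall n, (0 <= f n)%R) -> (k < M)%nat -> (f k <= rsum f M)%R.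
Proof. intros Hf. induction M; intros Hk. lia. simpl. destruct (Nat.eq_dec k M).
  subst. assert (0 <= rsum f M)%R by (apply rsum_ge0; auto). lra.
  assert (f k <= rsum f M)%R by (apply IHM; lia). specialize (Hf M). lra. Qed.

Lemma geom_weight (r A : R) : (0 <= r < 1)%R -> (0 <= A)%R ->
  exists C, (0 <= C)%R /\ forall n, (r ^ (n * n) * A ^ n <= C * r ^ n)%R.
Proof. intros Hr HA. destruct (pow_lt_1_zero r ltac:(rewrite Rabs_right; lra) (/ (A + 1)))%R as [n0 Hn0].
  apply Rinv_0_lt_compat; lra.
  assert (H0 : (r ^ n0 * A <= 1)%R).
  { specialize (Hn0 n0 (le_n _)). rewrite Rabs_right in Hn0 by (apply Rle_ge, pow_le; lra).
    assert (r ^ n0 * (A + 1) <= 1)%R.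
    { apply Rmult_le_reg_r with (/ (A + 1))%R. apply Rinv_0_lt_compat; lra.
      rewrite Rmult_assoc, Rinv_r by lra. lra. }
    assert (0 <= r ^ n0)%R by (apply pow_le; lra). nra. }
  set (f := fun n => (r ^ (n * n - n) * A ^ n)%R).
  assert (Hf : forall n, (0 <= f n)%R) by (intros; unfold f; apply Rmult_le_pos; apply pow_le; lra).
  exists (rsum f (S n0) + 1)%R. split. assert (0 <= rsum f (S n0))%R by (apply rsum_ge0; auto). lra.
  intros n. assert (0 <= rsum f (S n0))%R by (apply rsum_ge0; auto).
  assert (0 <= r ^ n)%R by (apply pow_le; lra).
  destruct (Compare_dec.le_lt_dec n n0).
  - assert (f n <= rsum f (S n0))%R by (apply rsum_term; auto; lia).
    replace (n * n)%nat with (n + (n * n - n))%nat by nia. rewrite pow_add.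
    change (r ^ (n * n - n) * A ^ n)%R with (f n). rewrite Rmult_assoc, (Rmult_comm _ (r ^ n)).
    apply Rmult_le_compat_l; [lra|]. apply Rle_trans with (rsum f (S n0)); [exact H2 | lra].
  - replace (n * n)%nat with (n + (n - 1) * n)%nat by nia. rewrite pow_add, pow_mult.
    rewrite Rmult_assoc, <- Rpow_mult_distr.
    assert ((r ^ (n - 1) * A) ^ n <= 1)%R.
    { apply pow_le1. split. apply Rmult_le_pos; auto. apply pow_le; lra.
      eapply Rle_trans. 2: apply H0. apply Rmult_le_compat_r; auto. apply pow_le_decr; lra || lia. }
    assert (0 <= (r ^ (n - 1) * A) ^ n)%R by (apply pow_le; apply Rmult_le_pos; auto; apply pow_le; lra).
    nra. Qed.

Lemma cv_eq f (l l' : C) : cv f l -> l = l' -> cv f l'.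
Proof. intros H <-; auto. Qed.

Lemma pow_cv0 (q : C) : (Cmod q < 1)%R -> cv (fun N => q ^ N) 0.
Proof. intros Hq eps He. pose proof (Cmod_ge_0 q).
  destruct (pow_lt_1_zero (Cmod q) ltac:(rewrite Rabs_right; lra) eps He) as [N0 HN].
  exists N0. intros N HN'. replace (q ^ N - 0) with (q ^ N) by ring. rewrite Cmod_pow.
  specialize (HN N HN'). rewrite Rabs_right in HN; auto. apply Rle_ge, pow_le; auto. Qed.

Lemma cv_shift_sub f l k : cv f l -> cv (fun N => f (N - k)%nat) l.
Proof. apply cv_comp. intros M. exists (M + k)%nat. intros; lia. Qed.

Lemma cf_cv1 q J : (Cmod q < 1)%R -> cv (fun N => cf q J N) 1.
Proof. intros Hq. induction J. exact (cv_const 1).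
  simpl cf. apply (cv_eq _ ((1 - 0) * 1)). apply cv_mult.
  apply cv_minus. apply cv_const. apply pow_cv0; auto.
  apply (cv_shift_sub (fun N => cf q J N) 1 1). auto. ring. Qed.

Lemma qpoch_lim_nz p P : (Cmod p < 1)%R -> cv (qpoch p p) P -> P <> 0.
Proof. intros Hp H E. subst P. destruct (qpoch_bounds p Hp) as [d [U [Hd HdU]]].
  destruct (H d Hd) as [N0 HN]. specialize (HN N0 (le_n _)).
  replace (qpoch p p N0 - 0) with (qpoch p p N0) in HN by ring. destruct (HdU N0). lra. Qed.

Lemma qb_cv p P n : (Cmod p < 1)%R -> cv (qpoch p p) P -> cv (fun N => qb p (2 * N) (N + n)) (/ P).
Proof. intros Hp H. pose proof (qpoch_lim_nz p P Hp H) as HP.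
  apply (cv_ext (fun N => qpoch p p (2 * N) / (qpoch p p (N + n) * qpoch p p (2 * N - (N + n))))).
  - exists n. intros N HN. rewrite qb_formula by (auto; lia). auto.
  - apply (cv_eq _ (P / (P * P))). apply cv_div. apply Cmult_neq_0; auto.
    + apply (cv_comp (qpoch p p) P (fun N => 2 * N)%nat). intros M; exists M; intros; lia. auto.
    + apply cv_mult.
      * apply (cv_comp (qpoch p p) P (fun N => N + n)%nat). intros M; exists M; intros; lia. auto.
      * apply (cv_comp (qpoch p p) P (fun N => 2 * N - (N + n))%nat). intros M; exists (M + n)%nat; intros; lia. auto.
    + field. auto. Qed.

Lemma fsum_bound (f : nat -> C) (D r : R) n : (0 <= r < 1)%R -> (0 <= D)%R ->
  (forall k, (Cmod (f k) <= D * r ^ k)%R) -> (Cmod (fsum f n) <= D / (1 - r))%R.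
Proof. intros Hr HD H. eapply Rle_trans. apply Cmod_fsum.
  eapply Rle_trans. apply rsum_le. intros k _. apply H.
  rewrite rsum_scal. unfold Rdiv. apply Rmult_le_compat_l; auto. apply rsum_geom; auto. Qed.

Lemma tannery (u : nat -> nat -> C) (D r : R) : (0 <= r < 1)%R ->
  (forall N n, (Cmod (u N n) <= D * r ^ n)%R) -> (forall n, cv (fun N => u N n) 0) ->
  cv (fun N => fsum (u N) (S N)) 0.
Proof. intros Hr Hb Hc eps He.
  assert (HD : (0 <= D)%R) by (pose proof (Hb O O); pose proof (Cmod_ge_0 (u O O)); simpl in H; lra).
  assert (Hx : (0 < eps * (1 - r) / (2 * (D + 1)))%R).
  { apply Rdiv_lt_0_compat. apply Rmult_lt_0_compat; lra. lra. }
  destruct (pow_lt_1_zero r ltac:(rewrite Rabs_right; lra) _ Hx) as [M HM].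
  specialize (HM M (le_n _)). rewrite Rabs_right in HM by (apply Rle_ge, pow_le; lra).
  assert (Hfin : cv (fun N => fsum (u N) M) 0).
  { apply (cv_eq _ (fsum (fun _ => 0) M)). apply cv_fsum. auto. apply fsum_zero. auto. }
  destruct (Hfin (eps / 2)%R ltac:(lra)) as [N1 HN1].
  exists (max M N1). intros N HN. replace (fsum (u N) (S N) - 0) with (fsum (u N) (S N)) by ring.
  replace (S N) with (M + (S N - M))%nat by lia. rewrite fsum_add.
  eapply Rle_lt_trans. apply Cmod_triangle.
  specialize (HN1 N ltac:(lia)). replace (fsum (u N) M - 0) with (fsum (u N) M) in HN1 by ring.
  assert (Cmod (fsum (fun k => u N (M + k)%nat) (S N - M)) <= (D * r ^ M) / (1 - r))%R.
  { apply fsum_bound; auto. apply Rmult_le_pos; auto. apply pow_le; lra.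
    intros k. rewrite Rmult_assoc, <- pow_add. apply Hb. }
  assert ((D * r ^ M) / (1 - r) < eps / 2)%R.
  { assert (0 <= r ^ M)%R by (apply pow_le; lra).
    apply Rle_lt_trans with ((D + 1) * r ^ M / (1 - r))%R.
    unfold Rdiv. apply Rmult_le_compat_r. left; apply Rinv_0_lt_compat; lra. nra.
    apply Rmult_lt_reg_r with (1 - r)%R. lra. unfold Rdiv. rewrite Rmult_assoc, Rinv_l by lra.
    apply Rmult_lt_reg_r with (/ (D + 1))%R. apply Rinv_0_lt_compat; lra.
    replace ((D + 1) * r ^ M * 1 * / (D + 1))%R with (r ^ M)%R by (field; lra).
    replace (eps * / 2 * (1 - r) * / (D + 1))%R with (eps * (1 - r) / (2 * (D + 1)))%R by (field; lra).
    auto. }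
  lra. Qed.

Lemma tannery2 (u : nat -> nat -> nat -> C) (D r : R) : (0 <= r < 1)%R ->
  (forall N j k, (Cmod (u N j k) <= D * r ^ j * r ^ k)%R) -> (forall j k, cv (fun N => u N j k) 0) ->
  cv (fun N => fsum (fun j => fsum (u N j) (S N)) (S N)) 0.
Proof. intros Hr Hb Hc.
  assert (HD : (0 <= D)%R) by (pose proof (Hb O O O); pose proof (Cmod_ge_0 (u O O O)); simpl in H; lra).
  apply (tannery _ (D / (1 - r)) r); auto.
  - intros N j. replace (D / (1 - r) * r ^ j)%R with ((D * r ^ j) / (1 - r))%R by (field; lra).
    apply fsum_bound; auto. apply Rmult_le_pos; auto. apply pow_le; lra.
  - intros j. apply (tannery (fun N => u N j) (D * r ^ j) r); auto.
Qed.

Lemma tannery3 (u : nat -> nat -> nat -> nat -> C) (D r : R) : (0 <= r < 1)%R ->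
  (forall N i j k, (Cmod (u N i j k) <= D * r ^ i * r ^ j * r ^ k)%R) -> (forall i j k, cv (fun N => u N i j k) 0) ->
  cv (fun N => fsum (fun i => fsum (fun j => fsum (u N i j) (S N)) (S N)) (S N)) 0.
Proof. intros Hr Hb Hc.
  assert (HD : (0 <= D)%R) by (pose proof (Hb O O O O); pose proof (Cmod_ge_0 (u O O O O)); simpl in H; lra).
  apply (tannery _ (D / (1 - r) / (1 - r)) r); auto.
  - intros N i. replace (D / (1 - r) / (1 - r) * r ^ i)%R with ((D * r ^ i / (1 - r)) / (1 - r))%R by (field; lra).
    apply fsum_bound; auto. apply Rmult_le_pos; [apply Rmult_le_pos; auto; apply pow_le; lra|].
    left; apply Rinv_0_lt_compat; lra.
    intros j. replace (D * r ^ i / (1 - r) * r ^ j)%R with ((D * r ^ i * r ^ j) / (1 - r))%R by (field; lra).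
    apply fsum_bound; auto. apply Rmult_le_pos; [apply Rmult_le_pos; auto|]; apply pow_le; lra.
  - intros i. apply (tannery2 (fun N => u N i) (D * r ^ i) r); auto.
Qed.

Lemma partial_fsum (q a : C) N : cor48_partial q a N =
  fsum (fun i => fsum (fun j => fsum (fun k => cor48_term q a i j k) (S N)) (S N)) (S N).
Proof. unfold cor48_partial. rewrite csum_fsum. apply fsum_ext; intros. rewrite csum_fsum.
  apply fsum_ext; intros. apply csum_fsum. Qed.

Lemma term_bound (q a : C) : (Cmod q < 1)%R -> a <> 0 -> exists K0, (0 <= K0)%R /\
  forall i j k, (Cmod (cor48_term q a i j k) <= K0 * Cmod q ^ i * Cmod q ^ j * Cmod q ^ k)%R.
Proof. intros Hq Ha. set (r := Cmod q). assert (Hr : (0 <= r < 1)%R) by (split; [apply Cmod_ge_0|auto]).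
  assert (Hma : (0 < Cmod a)%R) by (apply (proj1 (Cmod_gt_0 a)); auto).
  destruct (qpoch_bounds q Hq) as [d [U [Hd HdU]]].
  destruct (geom_weight r (Cmod a) Hr ltac:(lra)) as [C1 [HC1 HC1']].
  destruct (geom_weight r (/ Cmod a) Hr ltac:(left; apply Rinv_0_lt_compat; lra)) as [C2 [HC2 HC2']].
  assert (Hd3 : (0 < d * d * d)%R) by (repeat apply Rmult_lt_0_compat; lra).
  exists (C1 * C2 / (d * d * d))%R. split.
  { apply Rmult_le_pos. nra. left; apply Rinv_0_lt_compat; lra. }
  intros i j k. unfold cor48_term.
  pose proof (qpoch_nz q i Hq). pose proof (qpoch_nz q j Hq). pose proof (qpoch_nz q k Hq).
  rewrite Cmod_mult, Cmod_div, !Cmod_mult, Cmod_div, !Cmod_pow by (auto using Cpow_nz, Cmult_neq_0).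
  fold r. destruct (HdU i), (HdU j), (HdU k).
  assert (E1 : (r ^ (i * i + j * j + k * k + i * (j + k)) <= r ^ i * r ^ (j * j) * r ^ (k * k))%R).
  { rewrite <- !pow_add. apply pow_le_decr. lra. nia. }
  assert (E2 : (/ (Cmod (qpoch q q i) * Cmod (qpoch q q j) * Cmod (qpoch q q k)) <= / (d * d * d))%R).
  { apply Rinv_le_contravar. lra. apply Rmult_le_compat; try nra; apply Rmult_le_compat; nra. }
  assert (E3 : (Cmod a ^ j / Cmod a ^ k = Cmod a ^ j * (/ Cmod a) ^ k)%R).
  { rewrite pow_inv. auto. }
  rewrite E3. specialize (HC1' j). specialize (HC2' k).
  assert (0 <= r ^ i)%R by (apply pow_le; lra). assert (0 <= r ^ j)%R by (apply pow_le; lra).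
  assert (0 <= r ^ k)%R by (apply pow_le; lra).
  assert (0 <= r ^ (j * j))%R by (apply pow_le; lra). assert (0 <= r ^ (k * k))%R by (apply pow_le; lra).
  assert (0 <= Cmod a ^ j)%R by (apply pow_le; lra).
  assert (0 <= (/ Cmod a) ^ k)%R by (apply pow_le; left; apply Rinv_0_lt_compat; lra).
  assert (0 <= r ^ (i * i + j * j + k * k + i * (j + k)))%R by (apply pow_le; lra).
  assert (0 <= / (Cmod (qpoch q q i) * Cmod (qpoch q q j) * Cmod (qpoch q q k)))%R.
  { left. apply Rinv_0_lt_compat. repeat apply Rmult_lt_0_compat; lra. }
  unfold Rdiv.
  apply Rle_trans with ((r ^ i * r ^ (j * j) * r ^ (k * k)) * / (d * d * d) * (Cmod a ^ j * (/ Cmod a) ^ k))%R.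
  { apply Rmult_le_compat_r. nra. apply Rmult_le_compat; auto. }
  replace (r ^ i * r ^ (j * j) * r ^ (k * k) * / (d * d * d) * (Cmod a ^ j * (/ Cmod a) ^ k))%R with
    (/ (d * d * d) * r ^ i * ((r ^ (j * j) * Cmod a ^ j) * (r ^ (k * k) * (/ Cmod a) ^ k)))%R by ring.
  replace (C1 * C2 * / (d * d * d) * r ^ i * r ^ j * r ^ k)%R with
    (/ (d * d * d) * r ^ i * ((C1 * r ^ j) * (C2 * r ^ k)))%R by ring.
  assert (0 <= / (d * d * d))%R by (left; apply Rinv_0_lt_compat; lra).
  apply Rmult_le_compat_l. nra. apply Rmult_le_compat; auto; nra.
Qed.

Theorem corollary4p8 (q a : C) (hq : (Cmod q < 1)%R) (ha : a <> 0)
  (P1 P2 P3 P4 : C) :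
  is_qpoch_inf (- a * q) (q ^ 2) P1 ->
  is_qpoch_inf (- q / a) (q ^ 2) P2 ->
  is_qpoch_inf (q ^ 2) (q ^ 2) P3 ->
  is_qpoch_inf q q P4 ->
  filterlim (cor48_partial q a) eventually (locally (P1 * P2 * P3 / P4)).
Proof.
  intros H1 H2 H3 H4. unfold is_qpoch_inf in *.
  apply cv_filterlim in H1. apply cv_filterlim in H2. apply cv_filterlim in H3. apply cv_filterlim in H4.
  apply cv_filterlim.
  set (r := Cmod q). assert (Hr : (0 <= r < 1)%R) by (split; [apply Cmod_ge_0|auto]).
  assert (Hq2 : (Cmod (q ^ 2) < 1)%R).
  { rewrite Cmod_pow. fold r. simpl. nra. }
  assert (Hma : (0 < Cmod a)%R) by (apply (proj1 (Cmod_gt_0 a)); auto).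
  assert (HP3 : P3 <> 0) by (apply (qpoch_lim_nz (q ^ 2)); auto).
  assert (HP4 : P4 <> 0) by (apply (qpoch_lim_nz q); auto).
  set (c := P3 / P4).
  assert (SA : cv (fun N => cor48_partial q a N - Wsum q a N) 0).
  { apply (cv_ext (fun N => fsum (fun i => fsum (fun j => fsum (fun k =>
        cor48_term q a i j k * (1 - cf q (i + j) N * cf q (i + k) N)) (S N)) (S N)) (S N))).
    { exists O. intros N _. rewrite partial_fsum. unfold Wsum. rewrite <- fsum_minus. apply fsum_ext.
      intros i _. rewrite <- fsum_minus. apply fsum_ext. intros j _. rewrite <- fsum_minus.
      apply fsum_ext. intros k _. ring. }
    destruct (term_bound q a hq ha) as [K0 [HK0 HK0']].
    destruct (cf_bound q hq) as [B [HB HB']].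
    apply (tannery3 (fun N i j k => cor48_term q a i j k * (1 - cf q (i + j) N * cf q (i + k) N))
       (K0 * (1 + B * B)) r); auto.
    - intros N i j k. rewrite Cmod_mult.
      assert (Cmod (1 - cf q (i + j) N * cf q (i + k) N) <= 1 + B * B)%R.
      { eapply Rle_trans. apply Cmod_1_plus. rewrite Cmod_mult.
        pose proof (HB' (i + j)%nat N). pose proof (HB' (i + k)%nat N).
        assert (0 <= Cmod (cf q (i + j) N))%R by apply Cmod_ge_0.
        assert (0 <= Cmod (cf q (i + k) N))%R by apply Cmod_ge_0. nra. }
      specialize (HK0' i j k). fold r in HK0'.
      assert (0 <= Cmod (cor48_term q a i j k))%R by apply Cmod_ge_0.
      assert (0 <= Cmod (1 - cf q (i + j) N * cf q (i + k) N))%R by apply Cmod_ge_0.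
      replace (K0 * (1 + B * B) * r ^ i * r ^ j * r ^ k)%R with ((K0 * r ^ i * r ^ j * r ^ k) * (1 + B * B))%R by ring.
      apply Rmult_le_compat; auto.
    - intros i j k. apply (cv_eq _ (cor48_term q a i j k * (1 - 1 * 1))).
      apply cv_scal. apply cv_minus. apply cv_const. apply cv_mult; apply cf_cv1; auto. ring. }
  assert (SB : cv (fun N => Wsum q a N - c * (qpoch (- a * q) (q ^ 2) N * qpoch (- q / a) (q ^ 2) N)) 0).
  { destruct (qb_bound q hq) as [Bq [HBq HBq']]. destruct (qb_bound (q ^ 2) Hq2) as [Bq2 [HBq2 HBq2']].
    destruct (geom_weight r (Cmod a) Hr ltac:(lra)) as [C1 [HC1 HC1']].
    destruct (geom_weight r (/ Cmod a) Hr ltac:(left; apply Rinv_0_lt_compat; lra)) as [C2 [HC2 HC2']].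
    assert (Hdiff : forall N m, (Cmod (qb q (2 * N) m - c * qb (q ^ 2) (2 * N) m) <= Bq + Cmod c * Bq2)%R).
    { intros N m. unfold Cminus. eapply Rle_trans. apply Cmod_triangle. rewrite Cmod_opp, Cmod_mult.
      pose proof (HBq' (2 * N)%nat m). pose proof (HBq2' (2 * N)%nat m). pose proof (Cmod_ge_0 c).
      pose proof (Cmod_ge_0 (qb (q ^ 2) (2 * N) m)). nra. }
    assert (Hlim : forall m, cv (fun N => qb q (2 * N) (N + m) - c * qb (q ^ 2) (2 * N) (N + m)) 0).
    { intros m. apply (cv_eq _ (/ P4 - c * / P3)). apply cv_minus. apply qb_cv; auto.
      apply cv_scal. apply qb_cv; auto. unfold c. field. auto. }
    apply (cv_ext (fun N => fsum (fun n => q ^ (n * n) * a ^ n * (qb q (2 * N) (N + n) - c * qb (q ^ 2) (2 * N) (N + n))) (S N)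
        + fsum (fun n => q ^ (S n * S n) / a ^ S n * (qb q (2 * N) (N + S n) - c * qb (q ^ 2) (2 * N) (N + S n))) (S N))).
    { exists O. intros N _. rewrite W_closed by auto. rewrite jtp_finite by auto.
      rewrite (fsum_last_zero (fun n => q ^ (S n * S n) / a ^ S n * (qb q (2 * N) (N + S n) - c * qb (q ^ 2) (2 * N) (N + S n))) N).
      2: { rewrite !qb_zero by lia. ring. }
      transitivity (fsum (fun n => q ^ (n * n) * a ^ n * qb q (2 * N) (N + n)) (S N) - 
          fsum (fun k => c * (q ^ (k * k) * a ^ k * qb (q ^ 2) (2 * N) (N + k))) (S N) +
         (fsum (fun n => q ^ (S n * S n) / a ^ S n * qb q (2 * N) (N + S n)) N -
          fsum (fun k => c * (q ^ (S k * S k) / a ^ S k * qb (q ^ 2) (2 * N) (N + S k))) N)).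
      - rewrite <- !fsum_minus. f_equal; apply fsum_ext; intros; ring.
      - rewrite !fsum_scal. ring. }
    apply (cv_eq _ (0 + 0)). 2: ring. apply cv_plus.
    - apply (tannery _ (C1 * (Bq + Cmod c * Bq2)) r); auto.
      + intros N n. rewrite !Cmod_mult, !Cmod_pow. fold r.
        specialize (HC1' n). specialize (Hdiff N (N + n)%nat).
        assert (0 <= r ^ (n * n) * Cmod a ^ n)%R by (apply Rmult_le_pos; apply pow_le; lra).
        assert (0 <= Cmod (qb q (2 * N) (N + n) - c * qb (q ^ 2) (2 * N) (N + n)))%R by apply Cmod_ge_0.
        replace (C1 * (Bq + Cmod c * Bq2) * r ^ n)%R with ((C1 * r ^ n) * (Bq + Cmod c * Bq2))%R by ring.
        apply Rmult_le_compat; auto.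
      + intros n. apply (cv_eq _ (q ^ (n * n) * a ^ n * 0)). apply cv_scal. auto. ring.
    - apply (tannery _ (C2 * (Bq + Cmod c * Bq2)) r); auto.
      + intros N n. rewrite !Cmod_mult, Cmod_div, !Cmod_pow by (apply Cpow_nz; auto). fold r.
        specialize (HC2' (S n)). specialize (Hdiff N (N + S n)%nat).
        replace (r ^ (S n * S n) / Cmod a ^ S n)%R with (r ^ (S n * S n) * (/ Cmod a) ^ S n)%R by (rewrite pow_inv; reflexivity).
        assert (0 <= r ^ (S n * S n) * (/ Cmod a) ^ S n)%R.
        { apply Rmult_le_pos; apply pow_le. lra. left; apply Rinv_0_lt_compat; lra. }
        assert (0 <= Cmod (qb q (2 * N) (N + S n) - c * qb (q ^ 2) (2 * N) (N + S n)))%R by apply Cmod_ge_0.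
        assert (r ^ S n <= r ^ n)%R by (apply pow_le_decr; lra || lia).
        apply Rle_trans with ((C2 * r ^ S n) * (Bq + Cmod c * Bq2))%R.
        apply Rmult_le_compat; auto.
        assert (0 <= Bq + Cmod c * Bq2)%R by (pose proof (Cmod_ge_0 c); nra).
        replace (C2 * (Bq + Cmod c * Bq2) * r ^ n)%R with ((C2 * r ^ n) * (Bq + Cmod c * Bq2))%R by ring.
        apply Rmult_le_compat_r; auto. apply Rmult_le_compat_l; auto.
      + intros n. apply (cv_eq _ (q ^ (S n * S n) / a ^ S n * 0)). apply cv_scal.
        apply (Hlim (S n)). ring. }
  assert (SC : cv (fun N => c * (qpoch (- a * q) (q ^ 2) N * qpoch (- q / a) (q ^ 2) N)) (c * (P1 * P2))).
  { apply cv_scal. apply cv_mult; auto. }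
  apply (cv_ext (fun N => (cor48_partial q a N - Wsum q a N) + (Wsum q a N - c * (qpoch (- a * q) (q ^ 2) N * qpoch (- q / a) (q ^ 2) N))
      + c * (qpoch (- a * q) (q ^ 2) N * qpoch (- q / a) (q ^ 2) N))).
  { exists O. intros. ring. }
  apply (cv_eq _ (0 + 0 + c * (P1 * P2))). apply cv_plus; auto. apply cv_plus; auto.
  unfold c. field. auto.
Qed.
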